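(* Let $q\in(0,1]$. Then $\mathrm{F\o l}^{\mathrm{inn}}(R(SO_q(3)))=1-q^4$ and $\mathrm{F\o l}(R(SO_q(3)))=q^{-4}-q^4$.
   Context: $R(SO_q(3))$ is the fusion algebra with irreducible objects $I=\mathbb{Z}_+$, unit $0$, trivial involution, product $m\cdot n=\sum_{k=|m-n|}^{m+n}k$ (all integers in that range), and dimension $d(n)=[2n+1]_q$, where $[x]_q=\frac{q^{-x}-q^x}{q^{-1}-q}$ for $0<q<1$ and $[x]_1=x$. $\mathrm{supp}(r)$ is the set of elements of $I$ with nonzero coefficient in $r$. For $A\subseteq I$, $|A|=\sum_{\beta\in A}d(\beta)^2$, $A^c=I\setminus A$. A finite generating set is a finite $X\subseteq I$ such that every element of $I$ lies in $\mathrm{supp}$ of some product of elements of $X$. For finite $X,A$: $\partial_X(A)=\{\beta\in A:\exists x\in X,\ \mathrm{supp}(\beta x)\not\subseteq A\}\cup\{\beta\in A^c:\exists x\in X,\ \mathrm{supp}(\beta x)\not\subseteq A^c\}$, $\partial^{\mathrm{inn}}_X(A)=\{\beta\in A:\exists x\in X,\ \mathrm{supp}(\beta x)\not\subseteq A\}$. $\mathrm{F\o l}_X=\inf_A|\partial_XA|/|A|$, $\mathrm{F\o l}^{\mathrm{inn}}_X=\inf_A|\partial^{\mathrm{inn}}_XA|/|A|$ over nonempty finite $A$; $\mathrm{F\o l}$ and $\mathrm{F\o l}^{\mathrm{inn}}$ are their infima over finite generating sets $X$. *)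

(* Defs.v *)
From HB Require Import structures.
From mathcomp Require Import all_boot all_order all_algebra.
From mathcomp Require Import all_classical all_reals.
Set Implicit Arguments. Unset Strict Implicit. Unset Printing Implicit Defensive.
Import Order.TTheory GRing.Theory Num.Theory.
Local Open Scope classical_set_scope.
Local Open Scope ring_scope.

Section SOq3.
Variable R : realType.
Variable q : R.

Definition qnum (x : nat) : R :=
  if q == 1 then x%:R else (q ^- x - q ^+ x) / (q^-1 - q).

Definition dim (n : nat) : R := qnum (n.*2.+1).

(* supp(m . n) = { k | |m - n| <= k <= m + n } *)
Definition fsupp (m n : nat) : set nat :=
  [set k | ((m - n) + (n - m) <= k)%N /\ (k <= m + n)%N].

(* supp of the product of the irreducibles listed in s (empty product = unit 0);
   all structure constants are nonnegative, so supports simply propagate *)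
Fixpoint supp_prod (s : seq nat) : set nat :=
  match s with
  | [::] => [set 0%N]
  | x :: s' => [set k | exists2 j, supp_prod s' j & fsupp j x k]
  end.

Definition generating (X : seq nat) : Prop :=
  forall n : nat, exists s : seq nat, all (fun x => x \in X) s /\ supp_prod s n.

(* |P| = sum over P of d^2, for (finite) P, written as sup of partial sums *)
Definition wt (P : set nat) : R :=
  sup [set (\sum_(b < n | `[< P b >]) dim b ^+ 2) | n in [set: nat]].

Definition inn_boundary (X A : seq nat) : set nat :=
  [set b | b \in A /\ exists2 x, x \in X & ~ (fsupp b x `<=` [set k | k \in A])].

Definition out_boundary (X A : seq nat) : set nat :=
  [set b | b \notin A /\ exists2 x, x \in X & ~ (fsupp b x `<=` [set k | k \notin A])].

Definition boundary (X A : seq nat) : set nat := inn_boundary X A `|` out_boundary X A.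

Definition setA (A : seq nat) : set nat := [set b | b \in A].

Definition FolX_inn (X : seq nat) : R :=
  inf [set wt (inn_boundary X A) / wt (setA A) | A in [set A : seq nat | A != [::]]].

Definition FolX (X : seq nat) : R :=
  inf [set wt (boundary X A) / wt (setA A) | A in [set A : seq nat | A != [::]]].

Definition Fol_inn : R := inf [set FolX_inn X | X in generating].
Definition Fol : R := inf [set FolX X | X in generating].

End SOq3.

(* Main.v *)
Require Import Defs.
From HB Require Import structures.
From mathcomp Require Import all_boot all_order all_algebra.
From mathcomp Require Import all_classical all_reals.
From mathcomp Require Import ring lra zify.
Require Import Defs.
Set Implicit Arguments. Unset Strict Implicit. Unset Printing Implicit Defensive.
Import Order.TTheory GRing.Theory Num.Theory.
Local Open Scope classical_set_scope.
Local Open Scope ring_scope.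
Section S.
Variable R : realType.
Variable q : R.
Hypothesis hq0 : 0 < q.
Hypothesis hq1 : q <= 1.

Lemma qneq0 : q != 0. Proof. by rewrite gt_eqF. Qed.

Lemma dim_cl (n : nat) : q != 1 -> dim q n =
  ((q ^+ n.*2)^-1 * q^-1 - q ^+ n.*2 * q) / (q^-1 - q).
Proof.
move=> hq; rewrite /dim /qnum (negbTE hq) exprS; congr (_ / _).
by rewrite invfM mulrC [q * _]mulrC.
Qed.

Lemma qinv_neq (hq : q != 1) : q^-1 - q != 0.
Proof.
have ql : q < 1 by rewrite lt_neqAle hq hq1.
have : 1 < q^-1 by rewrite invf_gt1.
move=> h; rewrite subr_eq0; apply/negP => /eqP e; move: h; rewrite e; move/(lt_trans ql); by rewrite ltxx.
Qed.

Lemma dim0 : dim q 0 = 1.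
Proof.
case: (eqVneq q 1) => hq.
  by rewrite /dim /qnum hq eqxx.
rewrite dim_cl // expr0 invr1 !mul1r divff //; exact: qinv_neq.
Qed.

Lemma dimS n : dim q n.+1 = dim q n + q ^+ n.+1.*2 + (q ^+ n.+1.*2)^-1.
Proof.
case: (eqVneq q 1) => hq.
  rewrite /dim /qnum hq eqxx !expr1n invr1.
  have -> : (n.+1).*2.+1 = (n.*2.+1 + 2)%N by rewrite doubleS addn2.
  by rewrite natrD; ring.
have h1 := qinv_neq hq. have h0 := qneq0.
have ha : q ^+ n.*2 != 0 by rewrite expf_neq0.
rewrite !dim_cl // doubleS !exprS.
move: h1; set a := q ^+ n.*2 => h1.
have ql : q < 1 by rewrite lt_neqAle hq hq1.
have hq3 : q * q < q * 1 by rewrite ltr_pM2l.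
have hq2 : 0 < 1 + - q * q by lra.
by field; rewrite ?h0 ?ha ?h1 ?andbT /= gt_eqF.
Qed.

Lemma dimF1 n : q ^+ 2 * dim q n.+1 = dim q n + q ^+ n.+1.*2 * (1 + q ^+ 2).
Proof.
case: (eqVneq q 1) => hq.
  rewrite /dim /qnum hq eqxx !expr1n.
  have -> : (n.+1).*2.+1 = (n.*2.+1 + 2)%N by rewrite doubleS addn2.
  by rewrite natrD; ring.
have h1 := qinv_neq hq. have h0 := qneq0.
have ha : q ^+ n.*2 != 0 by rewrite expf_neq0.
rewrite !dim_cl // doubleS !exprS.
move: h1; set a := q ^+ n.*2 => h1.
have ql : q < 1 by rewrite lt_neqAle hq hq1.
have hq3 : q * q < q * 1 by rewrite ltr_pM2l.
have hq2 : 0 < 1 + - q * q by lra.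
by field; rewrite ?h0 ?ha ?h1 ?andbT /= gt_eqF.
Qed.

Lemma two_le_inv {x : R} : 0 < x -> 2 <= x + x^-1.
Proof.
move=> hx.
have e : x + x^-1 = (x * x + 1) / x by field; rewrite gt_eqF.
rewrite e ler_pdivlMr //; have := sqr_ge0 (x - 1); rewrite expr2; nra.
Qed.

Lemma xpos n : 0 < q ^+ n. Proof. exact: exprn_gt0. Qed.

Lemma dim_ge n : (n.*2.+1)%:R <= dim q n.
Proof.
elim: n => [|n IH]; first by rewrite dim0.
rewrite dimS doubleS -addn2 natrD.
have := two_le_inv (xpos (n.+1).*2). rewrite doubleS. lra.
Qed.

Lemma dim_gt0 n : 0 < dim q n.
Proof. apply: lt_le_trans (dim_ge n); by rewrite ltr0n. Qed.

Lemma dim_le_S n : dim q n <= dim q n.+1.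
Proof.
rewrite dimS. have h := xpos (n.+1).*2. have := h; rewrite -invr_gt0. lra.
Qed.

Lemma dim_mono m n : (m <= n)%N -> dim q m <= dim q n.
Proof.
move=> /subnK <-; elim: (n - m)%N => [|k IH]; first by rewrite add0n.
by rewrite addSn; apply: le_trans IH (dim_le_S _).
Qed.

Lemma F3 n : q ^+ n.*2 * dim q n <= (n.*2.+1)%:R.
Proof.
elim: n => [|n IH]; first by rewrite dim0 expr0 mulr1.
rewrite dimS doubleS !exprS.
have hx := xpos n.*2. move: IH hx; set a := q ^+ n.*2 => IH hx.
have ha : a != 0 by rewrite gt_eqF.
have -> : q * (q * a) * (dim q n + q * (q * a) + (q * (q * a))^-1)
   = q * q * (a * dim q n) + (q * (q * a)) ^+ 2 + 1.
  by field; rewrite ha gt_eqF.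
have hqq : q * q <= 1 by rewrite -expr2 exprn_ile1 // ltW.
have hd : 0 <= a * dim q n by rewrite mulr_ge0 // ltW // dim_gt0.
have hqa : q * (q * a) <= 1.
  have : q ^+ (n.+1).*2 <= 1 by rewrite exprn_ile1 // ltW.
  by rewrite doubleS !exprS.
have hqa0 : 0 <= q * (q * a) by rewrite !mulr_ge0 // ltW.
have h2 : (q * (q * a)) ^+ 2 <= 1 by rewrite expr_le1.
rewrite -(addn2 n.*2.+1) natrD.
have : q * q * (a * dim q n) <= a * dim q n by rewrite ler_piMl.
lra.
Qed.

Definition SS N := \sum_(i < N.+1) dim q i ^+ 2.

Lemma SS_S N : SS N.+1 = SS N + dim q N.+1 ^+ 2.
Proof. by rewrite /SS big_ord_recr. Qed.

Lemma SS0 : SS 0 = 1.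
Proof. by rewrite /SS big_ord_recr big_ord0 /= dim0 expr1n add0r. Qed.

Definition eta N := q ^+ N.+1.*2 * (1 + q ^+ 2).

Lemma eta_ge0 N : 0 <= eta N.
Proof. by rewrite /eta mulr_ge0 // ?addr_ge0 ?ltW ?xpos. Qed.

Lemma eta_le2 N : eta N <= 2.
Proof.
rewrite /eta.
have h1 : q ^+ N.+1.*2 <= 1 by rewrite exprn_ile1 // ltW.
have h2 : q ^+ 2 <= 1 by rewrite exprn_ile1 // ltW.
have h3 := xpos N.+1.*2. have h4 := xpos 2.
nra.
Qed.

Lemma eta_dim N : eta N * dim q N <= 2 * (N.*2.+1)%:R.
Proof.
have -> : eta N * dim q N = (q ^+ 2 * (1 + q ^+ 2)) * (q ^+ N.*2 * dim q N).
  by rewrite /eta doubleS -(addn2 N.*2) exprD; ring.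
have h2 : q ^+ 2 <= 1 by rewrite exprn_ile1 // ltW.
have h4 := xpos 2.
have h := F3 N.
have h5 : 0 <= q ^+ N.*2 * dim q N by rewrite mulr_ge0 // ltW ?xpos ?dim_gt0.
have h6 : q ^+ 2 * (1 + q ^+ 2) <= 2 by nra.
have h7 : 0 <= q ^+ 2 * (1 + q ^+ 2) by nra.
nra.
Qed.

Lemma delta_eq N : q ^+ 4 * dim q N.+1 ^+ 2 = (dim q N + eta N) ^+ 2.
Proof. by rewrite -dimF1 /eta exprMn -exprM. Qed.

Lemma delta_le N : q ^+ 4 * dim q N.+1 ^+ 2 <= dim q N ^+ 2 + 8 * (N.+1)%:R.
Proof.
rewrite delta_eq.
have h1 := eta_dim N. have h2 := eta_le2 N. have h3 := eta_ge0 N.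
have e1 : (N.*2.+1)%:R = 2 * N%:R + 1 :> R.
  by rewrite -(addn1 N.*2) -muln2 natrD natrM mulrC.
have -> : (N.+1)%:R = N%:R + 1 :> R by rewrite -(addn1 N) natrD.
rewrite e1 in h1.
rewrite !expr2; nra.
Qed.

Lemma lowS N : (1 - q ^+ 4) * SS N <= dim q N ^+ 2.
Proof.
elim: N => [|N IH]; first by rewrite SS0 dim0 mulr1 expr1n; have := xpos 4; lra.
rewrite SS_S.
have h : dim q N ^+ 2 <= q ^+ 4 * dim q N.+1 ^+ 2.
  rewrite delta_eq; have := eta_ge0 N; have := dim_gt0 N; rewrite !expr2; nra.
lra.
Qed.

Lemma eS N : dim q N ^+ 2 - (1 - q ^+ 4) * SS N <= 4 * (N.+1)%:R ^+ 2.
Proof.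
elim: N => [|N IH].
  rewrite SS0 dim0 expr1n; have := xpos 4; have : q ^+ 4 <= 1 by rewrite exprn_ile1 // ltW.
  lra.
rewrite SS_S.
have h := delta_le N.
have -> : (N.+2)%:R = (N.+1)%:R + 1 :> R by rewrite -(addn1 N.+1) natrD.
rewrite !expr2 in IH *. nra.
Qed.

Lemma SS_ge N : (N.+1)%:R ^+ 3 <= SS N.
Proof.
elim: N => [|N IH]; first by rewrite SS0 expr1n.
rewrite SS_S.
have h := dim_ge N.+1.
have h0 : 0 <= (N.+1).*2.+1%:R :> R by [].
have : (N.+1).*2.+1%:R ^+ 2 <= dim q N.+1 ^+ 2 by rewrite ler_pXn2r // ?nnegrE // ltW // dim_gt0.
have -> : (N.+2)%:R = (N.+1)%:R + 1 :> R by rewrite -(addn1 N.+1) natrD.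
have -> : (N.+1).*2.+1%:R = 2 * (N.+1)%:R + 1 :> R.
  by rewrite -(addn1 (N.+1).*2) -muln2 natrD natrM mulrC.
have : 0 <= (N.+1)%:R :> R by [].
move: IH; set m := (N.+1)%:R; rewrite !exprS expr0; nra.
Qed.

End S.
Section B.
Variable R : realType.

Lemma sum_mask_le (I : finType) (P Q : pred I) (F : I -> R) :
  (forall i, P i -> Q i) -> (forall i, 0 <= F i) ->
  \sum_(i | P i) F i <= \sum_(i | Q i) F i.
Proof.
move=> hPQ hF; rewrite [leLHS]big_mkcond [leRHS]big_mkcond; apply: ler_sum => i _.
case: (boolP (P i)) => hp; first by rewrite (hPQ _ hp).
by case: (Q i).
Qed.

Lemma sum_one n (P : pred nat) (F : nat -> R) a :
  (forall i, 0 <= F i) -> P a -> (a < n)%N -> F a <= \sum_(i < n | P i) F i.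
Proof.
move=> hF Pa ha; rewrite (bigD1 (Ordinal ha)) //=.
by rewrite lerDl sumr_ge0.
Qed.

Lemma sum_two n (P : pred nat) (F : nat -> R) a c :
  (forall i, 0 <= F i) -> P a -> P c -> a != c -> (a < n)%N -> (c < n)%N ->
  F a + F c <= \sum_(i < n | P i) F i.
Proof.
move=> hF Pa Pc hac ha hc; rewrite (bigD1 (Ordinal ha)) //= (bigD1 (Ordinal hc)) /=; last first.
  by rewrite Pc andTb; apply: contra hac => /eqP [->].
by rewrite addrA lerDl sumr_ge0.
Qed.

Variable q : R.
Hypothesis hq0 : 0 < q.
Hypothesis hq1 : q <= 1.

Lemma wt_eq (P : set nat) n0 : (forall b, P b -> (b < n0)%N) ->
  wt q P = \sum_(b < n0 | `[< P b >]) dim q b ^+ 2.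
Proof.
move=> hP.
rewrite /wt; set E := (X in sup X).
set T := \sum_(b < n0 | _) _.
have ub : ubound E T.
  move=> _ [n _ <-].
  rewrite (big_ord_widen_cond (maxn n n0) (fun b => `[< P b >]) (fun b => dim q b ^+ 2)) ?leq_maxl //.
  rewrite /T (big_ord_widen_cond (maxn n n0) (fun b => `[< P b >]) (fun b => dim q b ^+ 2)) ?leq_maxr //.
  apply: sum_mask_le => [i /andP [h1 h2]|i]; last by rewrite sqr_ge0.
  by rewrite h1 /=; apply: hP; apply/asboolP.
apply: le_anti; apply/andP; split.
  by apply: ge_sup => //; exists T, n0.
by apply: ub_le_sup; [exists T | exists n0].
Qed.


Lemma max_in (A : seq nat) : A != [::] -> \max_(a <- A) a \in A.
Proof.
elim: A => [//|a A IH] _; rewrite big_cons.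
case: (eqVneq A [::]) => [->|hA]; first by rewrite big_nil maxn0 mem_head.
have := IH hA; case: (leqP a (\max_(a <- A) a)) => h.
  by rewrite inE => ->; rewrite orbT.
by rewrite mem_head.
Qed.

Lemma max_ge (A : seq nat) b : b \in A -> (b <= \max_(a <- A) a)%N.
Proof. by move=> h; apply: (@leq_bigmax_seq _ A xpredT id b h). Qed.

Lemma wtA_le (A : seq nat) : A != [::] ->
  0 < wt q (setA A) /\ wt q (setA A) <= SS q (\max_(a <- A) a).
Proof.
move=> hA; set M := \max_(a <- A) a.
rewrite (wt_eq (n0 := M.+1)); last by move=> b hb; rewrite ltnS max_ge.
split.
  apply: lt_le_trans (sum_one (n := M.+1) (P := fun b : nat => `[< setA A b >]) (F := fun b => dim q b ^+ 2) (a := M) _ _ _).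
  - by rewrite exprn_gt0 // (dim_gt0 hq0 hq1).
  - by move=> i; rewrite sqr_ge0.
  - by apply/asboolP; rewrite /setA; apply: max_in.
  - by [].
by rewrite /SS; apply: sum_mask_le => // i; rewrite sqr_ge0.
Qed.

Lemma lower_inn (X A : seq nat) x : x \in X -> (0 < x)%N -> A != [::] ->
  1 - q ^+ 4 <= wt q (inn_boundary X A) / wt q (setA A).
Proof.
move=> hx x0 hA; have [wpos wle] := wtA_le hA.
set M := \max_(a <- A) a in wle.
have MA : M \in A by apply: max_in.
rewrite ler_pdivlMr //.
have h1 : 0 <= 1 - q ^+ 4 by rewrite subr_ge0 exprn_ile1 // ltW.
apply: le_trans (ler_wpM2l h1 wle) _.
apply: le_trans (lowS hq0 hq1 M) _.
rewrite (wt_eq (n0 := M.+1)); last by move=> b [hb _]; rewrite ltnS max_ge.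
apply: (sum_one (P := fun b : nat => `[< inn_boundary X A b >]) (F := fun b => dim q b ^+ 2)) => //.
  by move=> i; rewrite sqr_ge0.
apply/asboolP; split => //; exists x => // hsub.
have : (M + x)%N \in A.
  apply: hsub; rewrite /fsupp /=; split; last by [].
  lia.
by move/max_ge; rewrite -/M; lia.
Qed.


Lemma dim_step N : dim q N ^+ 2 <= q ^+ 4 * dim q N.+1 ^+ 2.
Proof.
rewrite (delta_eq hq0 hq1); have := eta_ge0 hq0 N; have := dim_gt0 hq0 hq1 N.
rewrite !expr2; nra.
Qed.

Lemma lower_out (X A : seq nat) x : x \in X -> (0 < x)%N -> A != [::] ->
  q ^- 4 - q ^+ 4 <= wt q (boundary X A) / wt q (setA A).
Proof.
move=> hx x0 hA; have [wpos wle] := wtA_le hA.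
set M := \max_(a <- A) a in wle.
have MA : M \in A by apply: max_in.
set mx := \max_(y <- X) y.
rewrite ler_pdivlMr //.
have q4p : 0 < q ^+ 4 by rewrite exprn_gt0.
have q41 : q ^+ 4 <= 1 by rewrite exprn_ile1 // ltW.
have rq : q ^- 4 * q ^+ 4 = 1 by rewrite mulVf // gt_eqF.
have rp : 0 < q ^- 4 by rewrite invr_gt0.
have h1 : 0 <= q ^- 4 - q ^+ 4.
  have : 1 <= q ^- 4 by rewrite invf_ge1.
  lra.
apply: le_trans (ler_wpM2l h1 wle) _.
have low := lowS hq0 hq1 M.
have st := dim_step M.
have mon : dim q M.+1 ^+ 2 <= dim q (M + x) ^+ 2.
  have d1 := dim_gt0 hq0 hq1 M.+1. have d2 := dim_gt0 hq0 hq1 (M + x).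
  have dm : dim q M.+1 <= dim q (M + x).
    by apply: (dim_mono hq0 hq1); rewrite -addn1 leq_add2l.
  by rewrite ler_pXn2r // nnegrE ltW.
have key : (q ^- 4 - q ^+ 4) * SS q M <= dim q M ^+ 2 + dim q (M + x) ^+ 2.
  have e : q ^- 4 - q ^+ 4 = (1 + q ^- 4) * (1 - q ^+ 4).
    by rewrite mulrDl mul1r mulrBr mulr1 rq; ring.
  rewrite e -mulrA.
  have A1 : (1 + q ^- 4) * ((1 - q ^+ 4) * SS q M) <= (1 + q ^- 4) * dim q M ^+ 2.
    by rewrite ler_wpM2l // addr_ge0 // ltW.
  apply: le_trans A1 _.
  rewrite mulrDl mul1r lerD2l.
  have A2 : q ^- 4 * dim q M ^+ 2 <= q ^- 4 * (q ^+ 4 * dim q M.+1 ^+ 2).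
    by rewrite ler_wpM2l // ltW.
  apply: le_trans A2 _.
  by rewrite mulrA rq mul1r.
apply: le_trans key _.
clear mon st low h1 rp rq q41 q4p wle wpos.
rewrite (wt_eq (n0 := (M + mx).+1)); last first.
  move=> b [[hb _]|[hb [y hy hsub]]]; first by have := max_ge hb; rewrite -/M; lia.
  have ymx : (y <= mx)%N by apply: (@leq_bigmax_seq _ X xpredT id y hy).
  rewrite ltnS; apply/negPn/negP; rewrite -ltnNge => hbig.
  apply: hsub => k [hk1 hk2] /=; apply/negP => kA.
  have := max_ge kA; rewrite -/M; lia.
have xmx : (x <= mx)%N by apply: (@leq_bigmax_seq _ X xpredT id x hx).
apply: (sum_two (P := fun b : nat => `[< boundary X A b >]) (F := fun b => dim q b ^+ 2)).
- by move=> i; rewrite sqr_ge0.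
- apply/asboolP; left; split => //; exists x => // hsub.
  have : (M + x)%N \in A by apply: hsub; rewrite /fsupp /=; split; [lia | by []].
  by move/max_ge; rewrite -/M; lia.
- apply/asboolP; right; split.
    by apply/negP => /max_ge; rewrite -/M; lia.
  exists x => // hsub.
  have : M \notin A by apply: hsub; rewrite /fsupp /=; split; lia.
  by rewrite MA.
- by rewrite -{1}(addn0 M) eqn_add2l; rewrite eq_sym -lt0n.
- lia.
- lia.
Qed.


Lemma gen1 : generating [:: 1%N].
Proof.
move=> n; exists (nseq n 1%N); split; first by rewrite all_nseq orbT.
elim: n => [//|n IH] /=; exists n => //; rewrite /fsupp /=; split; lia.
Qed.

Lemma supp0 (s : seq nat) k : all (fun x => x == 0%N) s -> supp_prod s k -> k = 0%N.
Proof.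
elim: s k => [|x s IH] k /=; first by move=> _ ->.
move=> /andP [/eqP -> hs] [j hj [h1 h2]].
have := IH j hs hj; move=> ej; subst j; lia.
Qed.

Lemma gen_pos X : generating X -> exists2 x, x \in X & (0 < x)%N.
Proof.
move=> hX; case: (boolP (has (fun x => 0 < x)%N X)) => [/hasP [x hx h]|/hasPn hn].
  by exists x.
have [s [hs h1]] := hX 1%N.
have : all (fun x => x == 0%N) s.
  apply/allP => x xs; have := hn x ((allP hs) x xs); rewrite lt0n; by case: eqP.
by move/supp0 => /(_ _ h1).
Qed.

Lemma lim_le (x t C : R) : 0 <= C -> (forall N, x <= t + C / (N.+1)%:R) -> x <= t.
Proof.
move=> hC h; apply/ler_addgt0Pr => e he.
apply: le_trans (h (Num.truncn (C / e))) _.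
rewrite lerD2l ler_pdivrMr // mulrC -ler_pdivrMr //.
exact: ltW (truncnS_gt _).
Qed.

Definition AN N := iota 0 N.+1.

Lemma inAN N b : (b \in AN N) = (b <= N)%N.
Proof. by rewrite /AN mem_iota add0n ltnS. Qed.

Lemma AN_neq N : AN N != [::]. Proof. by []. Qed.

Lemma wt_AN N : wt q (setA (AN N)) = SS q N.
Proof.
rewrite (wt_eq (n0 := N.+1)); last by move=> b; rewrite /setA /= inAN.
rewrite /SS; apply: eq_bigl => i; apply/asboolP; rewrite /setA /= inAN -ltnS.
exact: ltn_ord.
Qed.

Lemma inn_AN N b : inn_boundary [:: 1%N] (AN N) b -> b = N.
Proof.
move=> [hb [y]]; rewrite inE => /eqP -> hsub.
move: hb; rewrite inAN => hb.
case: (ltngtP b N) => // hlt; last by lia.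
exfalso; apply: hsub => k [h1 h2] /=; rewrite inAN; lia.
Qed.

Lemma bd_AN N b : boundary [:: 1%N] (AN N) b -> b = N \/ b = N.+1.
Proof.
move=> [/inn_AN -> | [hb [y]]]; first by left.
rewrite inE => /eqP -> hsub; right.
move: hb; rewrite inAN -ltnNge => hb.
case: (ltngtP b N.+1) => // hlt; first by lia.
exfalso; apply: hsub => k [h1 h2] /=; rewrite inAN; lia.
Qed.

Lemma sqpos n : 0 <= dim q n ^+ 2. Proof. exact: sqr_ge0. Qed.

Lemma wt_inn_AN N : wt q (inn_boundary [:: 1%N] (AN N)) <= dim q N ^+ 2.
Proof.
rewrite (wt_eq (n0 := N.+1)); last by move=> b /inn_AN ->.
apply: le_trans (sum_mask_le (Q := pred1 ord_max) _ _) _.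
- move=> i /asboolP /inn_AN hi; apply/eqP/val_inj => /=; exact: hi.
- by move=> i; apply: sqpos.
by rewrite big_pred1_eq.
Qed.

Lemma wt_bd_AN N : wt q (boundary [:: 1%N] (AN N)) <= dim q N ^+ 2 + dim q N.+1 ^+ 2.
Proof.
rewrite (wt_eq (n0 := N.+2)); last by move=> b /bd_AN [->|->].
apply: le_trans (sum_mask_le (Q := fun i : 'I_N.+2 => (N <= i)%N) _ _) _.
- by move=> i /asboolP /bd_AN [->|->].
- by move=> i; apply: sqpos.
rewrite big_mkcond big_ord_recr big_ord_recr /= big1 ?add0r ?leqnn ?leqnSn //.
move=> i _; rewrite leqNgt /=; by rewrite ltn_ord.
Qed.


Lemma SSpos N : 0 < SS q N.
Proof.
apply: lt_le_trans (SS_ge hq0 hq1 N); by rewrite exprn_gt0 // ltr0n.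
Qed.

Lemma Cm_le N (C : R) : 0 <= C -> C * (N.+1)%:R ^+ 2 <= C / (N.+1)%:R * SS q N.
Proof.
move=> hC; rewrite mulrAC -mulrA ler_wpM2l // ler_pdivlMr ?ltr0n //.
by rewrite -exprSr; apply: SS_ge.
Qed.

Lemma up_inn N : wt q (inn_boundary [:: 1%N] (AN N)) / wt q (setA (AN N))
  <= 1 - q ^+ 4 + 4 / (N.+1)%:R.
Proof.
rewrite wt_AN ler_pdivrMr ?SSpos //.
apply: le_trans (wt_inn_AN N) _.
have h1 := eS hq0 hq1 N.
have h2 := Cm_le N (C := 4) (ler0n _ 4).
rewrite mulrDl; move: h1 h2; set T := 4 / _ * _; lra.
Qed.

Lemma up_out N : wt q (boundary [:: 1%N] (AN N)) / wt q (setA (AN N))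
  <= q ^- 4 - q ^+ 4 + (4 + 12 * q ^- 4) / (N.+1)%:R.
Proof.
rewrite wt_AN ler_pdivrMr ?SSpos //.
apply: le_trans (wt_bd_AN N) _.
have q4p : 0 < q ^+ 4 by rewrite exprn_gt0.
have rq : q ^- 4 * q ^+ 4 = 1 by rewrite mulVf // gt_eqF.
have rp : 0 < q ^- 4 by rewrite invr_gt0.
have f2 := eS hq0 hq1 N.
have f1 := delta_le hq0 hq1 N.
have f6 := Cm_le N (C := 4 + 12 * q ^- 4) (addr_ge0 (ler0n _ 4) (mulr_ge0 (ler0n _ 12) (ltW rp))).
move: f1 f2 f6.
set D2 := dim q N.+1 ^+ 2. set d2 := dim q N ^+ 2. set S := SS q N.
set m := (N.+1)%:R. set r := q ^- 4. set q4 := q ^+ 4.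
move=> f1 f2 f6.
have m1 : 1 <= m by rewrite /m ler1n.
have f1' : D2 <= r * d2 + 8 * r * m.
  have := ler_wpM2l (ltW rp) f1; rewrite mulrA rq mul1r -/r; lra.
have f3 : r * d2 <= r * ((1 - q4) * S + 4 * m ^+ 2).
  by rewrite ler_wpM2l ?(ltW rp) //; lra.
have f5 : 8 * r * m <= 8 * r * m ^+ 2.
  rewrite ler_wpM2l ?mulr_ge0 ?(ltW rp) // expr2 ler_pMr; lra.
have f7 : r * q4 * S = S by rewrite rq mul1r.
rewrite mulrDl; move: f6; set T := _ / m * S => f6.
lra.
Qed.

End B.
Theorem proposition5p3 (R : realType) (q : R) (hq0 : 0 < q) (hq1 : q <= 1) :
  Fol_inn q = 1 - q ^+ 4 /\ Fol q = q ^- 4 - q ^+ 4.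
Proof.
have hne : forall (f : seq nat -> R), [set f A | A in [set A : seq nat | A != [::]]] !=set0.
  by move=> f; exists (f [:: 0%N]), [:: 0%N].
split.
- have lbX : forall X, generating X ->
      lbound [set wt q (inn_boundary X A) / wt q (setA A) | A in [set A : seq nat | A != [::]]] (1 - q ^+ 4).
    move=> X hX _ [A hA <-]; have [x hx x0] := gen_pos hq0 hq1 hX.
    by move: (lower_inn hq0 hq1 hx x0 hA).
  have lbF : lbound [set FolX_inn q X | X in generating] (1 - q ^+ 4).
    move=> _ [X hX <-]; apply: lb_le_inf; [exact: hne | exact: lbX].
  apply: le_anti; apply/andP; split; last first.
    by apply: lb_le_inf => //; exists (FolX_inn q [:: 1%N]), [:: 1%N] => //; exact: (gen1 hq0 hq1).
  have h1 : Fol_inn q <= FolX_inn q [:: 1%N].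
    by apply: ge_inf; [exists (1 - q ^+ 4) | exists [:: 1%N] => //; exact: (gen1 hq0 hq1)].
  apply: le_trans h1 _.
  apply: (lim_le (C := 4)) => // N.
  apply: le_trans (up_inn hq0 hq1 N).
  apply: ge_inf; first by exists (1 - q ^+ 4); apply: lbX; exact: (gen1 hq0 hq1).
  by exists (AN N).
- have lbX : forall X, generating X ->
      lbound [set wt q (boundary X A) / wt q (setA A) | A in [set A : seq nat | A != [::]]] (q ^- 4 - q ^+ 4).
    move=> X hX _ [A hA <-]; have [x hx x0] := gen_pos hq0 hq1 hX.
    by move: (lower_out hq0 hq1 hx x0 hA).
  have lbF : lbound [set FolX q X | X in generating] (q ^- 4 - q ^+ 4).
    move=> _ [X hX <-]; apply: lb_le_inf; [exact: hne | exact: lbX].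
  apply: le_anti; apply/andP; split; last first.
    by apply: lb_le_inf => //; exists (FolX q [:: 1%N]), [:: 1%N] => //; exact: (gen1 hq0 hq1).
  have h1 : Fol q <= FolX q [:: 1%N].
    by apply: ge_inf; [exists (q ^- 4 - q ^+ 4) | exists [:: 1%N] => //; exact: (gen1 hq0 hq1)].
  apply: le_trans h1 _.
  have rp : 0 < q ^- 4 by rewrite invr_gt0 exprn_gt0.
  apply: (lim_le (C := 4 + 12 * q ^- 4)) => [|N].
    by rewrite addr_ge0 // mulr_ge0 // ltW.
  apply: le_trans (up_out hq0 hq1 N).
  apply: ge_inf; first by exists (q ^- 4 - q ^+ 4); apply: lbX; exact: (gen1 hq0 hq1).
  by exists (AN N).
Qed.
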